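(* Let $\mathcal V\subseteq B(H)$ be an operator system and suppose $p\in\mathcal V$ is a projection in $B(H)$. Then for any $x\in\mathcal V$ with $x=x^*$, we have $pxp\ge0$ in $B(H)$ if and only if for every $\epsilon>0$ there exists $t>0$ such that $x+\epsilon p+t(I-p)\ge 0$. *)

(* Defs.v *)
From HB Require Import structures.
From mathcomp Require Import all_boot all_order all_algebra.
From mathcomp Require Import reals.
From mathcomp Require Import complex.
Set Implicit Arguments. Unset Strict Implicit. Unset Printing Implicit Defensive.
Import Order.TTheory GRing.Theory Num.Theory.
Local Open Scope ring_scope.
Local Open Scope complex_scope.

Section Hilbert.
Variables (R : realType) (H : lmodType R[i]) (ip : H -> H -> R[i]).

Definition is_inner_product : Prop :=
  [/\ forall (a : R[i]) (u v w : H), ip (a *: u + v) w = a * ip u w + ip v w,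
      forall u v : H, ip u v = conjc (ip v u),
      forall u : H, 0 <= ip u u &
      forall u : H, ip u u = 0 -> u = 0].

Definition ipnorm (h : H) : R := Num.sqrt (complex.Re (ip h h)).

Definition ip_complete : Prop :=
  forall u : nat -> H,
    (forall e : R, 0 < e -> exists N, forall m n, (N <= m)%N -> (N <= n)%N ->
        ipnorm (u m - u n) < e) ->
    exists l : H, forall e : R, 0 < e -> exists N, forall n, (N <= n)%N ->
        ipnorm (u n - l) < e.

Definition is_hilbert : Prop := is_inner_product /\ ip_complete.

Definition bounded_op (T : H -> H) : Prop :=
  (forall (a : R[i]) (u v : H), T (a *: u + v) = a *: T u + T v) /\
  exists M : R, forall h : H, ipnorm (T h) <= M * ipnorm h.

Definition is_adjoint (T S : H -> H) : Prop :=
  forall u v : H, ip (T u) v = ip u (S v).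

Definition selfadjoint (T : H -> H) : Prop := is_adjoint T T.

Definition op_pos (T : H -> H) : Prop := forall h : H, 0 <= ip (T h) h.

Definition projection (p : H -> H) : Prop :=
  bounded_op p /\ selfadjoint p /\ (forall h, p (p h) = p h).

Definition operator_system (V : (H -> H) -> Prop) : Prop :=
  (forall T, V T -> bounded_op T) /\
  V (fun h => h) /\
  V (fun _ => 0) /\
  (forall S T, V S -> V T -> V (fun h => S h + T h)) /\
  (forall (a : R[i]) T, V T -> V (fun h => a *: T h)) /\
  (forall T, V T -> exists S, V S /\ is_adjoint T S).
End Hilbert.

(* Main.v *)
Require Import Defs.
From HB Require Import structures.
From mathcomp Require Import all_boot all_order all_algebra.
From mathcomp Require Import reals.
From mathcomp Require Import complex.
From mathcomp Require Import ring lra.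
Import Order.TTheory GRing.Theory Num.Theory.
Local Open Scope ring_scope.
Local Open Scope complex_scope.
Set Implicit Arguments. Unset Strict Implicit.

Section Aux.
Variables (R : realType) (H : lmodType R[i]) (ip : H -> H -> R[i]).
Hypothesis hip : is_inner_product ip.

Lemma ReD (a b : R[i]) : complex.Re (a + b) = complex.Re a + complex.Re b.
Proof. by case: a; case: b. Qed.
Lemma ReB (a b : R[i]) : complex.Re (a - b) = complex.Re a - complex.Re b.
Proof. by case: a; case: b. Qed.
Lemma ReN (a : R[i]) : complex.Re (- a) = - complex.Re a.
Proof. by case: a. Qed.
Lemma Re0 : complex.Re (0 : R[i]) = 0.
Proof. by []. Qed.
Lemma ReMr (r : R) (b : R[i]) : complex.Re (r%:C * b) = r * complex.Re b.
Proof. case: b => b1 b2 /=; ring. Qed.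

Lemma conjD (a b : R[i]) : (conjc (a + b)) = conjc a + conjc b.
Proof. by case: a; case: b => * /=; rewrite /conjc /= opprD. Qed.
Lemma conjM (a b : R[i]) : (conjc (a * b)) = conjc a * conjc b.
Proof. case: a; case: b => * /=; rewrite /conjc /=; congr Complex; ring. Qed.
Lemma conjR (r : R) : (conjc (r%:C : R[i])) = r%:C.
Proof. by rewrite /conjc /= oppr0. Qed.
Lemma conjN1 : (conjc (-1 : R[i])) = -1.
Proof. by rewrite /conjc /= oppr0. Qed.
Lemma ipDl u v w : ip (u + v) w = ip u w + ip v w.
Proof. case: hip => L _ _ _. by rewrite -[u]scale1r L mul1r scale1r. Qed.
Lemma ip0l w : ip 0 w = 0.
Proof. have := ipDl 0 0 w. rewrite addr0 => E. apply: (addrI (ip 0 w)). by rewrite addr0 -E. Qed.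
Lemma ipZl a u w : ip (a *: u) w = a * ip u w.
Proof. case: hip => L _ _ _. by rewrite -[a *: u]addr0 L ip0l addr0. Qed.
Lemma ipNl u w : ip (- u) w = - ip u w.
Proof. by rewrite -scaleN1r ipZl mulN1r. Qed.
Lemma ipBl u v w : ip (u - v) w = ip u w - ip v w.
Proof. by rewrite ipDl ipNl. Qed.
Lemma ipC u v : ip u v = (conjc (ip v u)).
Proof. by case: hip => _ C _ _. Qed.
Lemma ipDr u v w : ip u (v + w) = ip u v + ip u w.
Proof. by rewrite ipC ipDl conjD (ipC u v) (ipC u w). Qed.
Lemma ipZr a u w : ip u (a *: w) = conjc a * ip u w.
Proof. by rewrite ipC ipZl conjM (ipC u w). Qed.
Lemma ipZRr (r : R) u w : ip u (r%:C *: w) = r%:C * ip u w.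
Proof. by rewrite ipZr conjR. Qed.
Lemma ip0r w : ip w 0 = 0.
Proof. by rewrite ipC ip0l conjc0. Qed.
Lemma ipNr u w : ip u (- w) = - ip u w.
Proof. by rewrite -scaleN1r ipZr conjN1 mulN1r. Qed.
Lemma ipBr u v w : ip u (v - w) = ip u v - ip u w.
Proof. by rewrite ipDr ipNr. Qed.
Lemma ip_ge0 u : 0 <= ip u u.
Proof. by case: hip. Qed.
Lemma Reip_ge0 u : 0 <= complex.Re (ip u u).
Proof. by move: (ip_ge0 u); rewrite lecE => /andP[]. Qed.

Lemma selfadj_Im T h : selfadjoint ip T -> complex.Im (ip (T h) h) = 0.
Proof.
move=> sT. have E : ip (T h) h = (conjc (ip (T h) h)) by rewrite {1}sT -ipC.
move: E. case: (ip (T h) h) => a b /= [] /eqP. rewrite -subr_eq0 opprK -mulr2n.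
rewrite mulrn_eq0 /= => /eqP //.
Qed.

Lemma pos_of T h : complex.Im (ip (T h) h) = 0 -> 0 <= complex.Re (ip (T h) h) ->
  0 <= ip (T h) h.
Proof. by move=> H1 H2; rewrite lecE H1 /= eqxx H2. Qed.

Lemma linD {T : H -> H} : bounded_op ip T -> forall u v, T (u + v) = T u + T v.
Proof. by case=> L _ u v; rewrite -[u]scale1r L !scale1r. Qed.
Lemma lin0 {T : H -> H} : bounded_op ip T -> T 0 = 0.
Proof. move=> hT; have := linD hT 0 0; rewrite addr0 => E.
apply: (addrI (T 0)). by rewrite addr0 -E. Qed.
Lemma linZ {T : H -> H} : bounded_op ip T -> forall a u, T (a *: u) = a *: T u.
Proof. move=> hT a u; case: (hT) => L _. by rewrite -[a *: u]addr0 L lin0 // addr0. Qed.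
Lemma linB {T : H -> H} : bounded_op ip T -> forall u v, T (u - v) = T u - T v.
Proof. move=> hT u v. by rewrite linD // -scaleN1r linZ // scaleN1r. Qed.


Lemma bound_Q (x : H -> H) : selfadjoint ip x -> bounded_op ip x ->
  exists C : R, 0 <= C /\ forall w,
    - (C * complex.Re (ip w w)) <= complex.Re (ip (x w) w) /\
    complex.Re (ip (x w) w) <= C * complex.Re (ip w w).
Proof.
move=> sx bx. case: (bx) => _ [M HM].
exists (M ^+ 2 + 1). split; first by rewrite addr_ge0 // sqr_ge0.
move=> w.
have W0 := Reip_ge0 w. have X0 := Reip_ge0 (x w).
have HXW : complex.Re (ip (x w) (x w)) <= M ^+ 2 * complex.Re (ip w w).
  have := HM w. rewrite /ipnorm.
  have s1 := sqr_sqrtr X0. have s2 := sqr_sqrtr W0.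
  have n1 := sqrtr_ge0 (complex.Re (ip (x w) (x w))).
  have n2 := sqrtr_ge0 (complex.Re (ip w w)).
  move: s1 s2 n1 n2.
  set A := Num.sqrt _. set B := Num.sqrt _. move=> s1 s2 n1 n2 hAB.
  rewrite -s1 -s2. nra.
have P1 := Reip_ge0 (x w + w). have P2 := Reip_ge0 (x w - w).
move: P1 P2. rewrite !ipDl !ipDr !ipNl !ipNr !ReD !ReN -(sx w w).
move=> P1 P2. split; nra.
Qed.

Lemma core (x : H -> H) (C eps : R) (a b : H) :
  selfadjoint ip x -> bounded_op ip x -> 0 <= C ->
  (forall w, - (C * complex.Re (ip w w)) <= complex.Re (ip (x w) w) /\
    complex.Re (ip (x w) w) <= C * complex.Re (ip w w)) ->
  ip a b = 0 -> ip b a = 0 -> 0 <= complex.Re (ip (x a) a) -> 0 < eps ->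
  0 <= complex.Re (ip (x (a + b) + eps%:C *: a + (2 * C * (1 + C / eps) + 1)%:C *: b) (a + b)).
Proof.
move=> sx bx C0 HC hab hba Qa e0.
set k := 1 + C / eps.
have k1 : 1 <= k by rewrite /k lerDl divr_ge0 // ltW.
have ke : C <= k * eps by rewrite /k mulrDl mul1r mulrVK ?lerDr ?ltW // unitfE gt_eqF.
set t := 2 * C * k + 1.
have [Lw Uw] := HC (a + k%:C *: b).
have [Lb Ub] := HC b.
have A0 := Reip_ge0 a. have B0 := Reip_ge0 b.
move: Lw Uw Lb Ub.
rewrite !(linD bx) !(linZ bx) !ipDl !ipDr !ipZl !ipZRr hab hba !ReD !ReMr.
rewrite !Re0 !mulr0 !addr0 !add0r.
move=> Lw Uw Lb Ub.
rewrite /t.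
set qa := complex.Re (ip (x a) a) in Qa Lw Uw *.
set qab := complex.Re (ip (x a) b) in Lw Uw *.
set qba := complex.Re (ip (x b) a) in Lw Uw *.
set qb := complex.Re (ip (x b) b) in Lw Uw Lb Ub *.
set A := complex.Re (ip a a) in A0 Lw Uw *.
set B := complex.Re (ip b b) in B0 Lw Uw Lb Ub *.
have k0 : 0 < k by apply: lt_le_trans k1.
have h1 : 0 <= (k - 1) * qa by apply: mulr_ge0 => //; rewrite subr_ge0.
have h2 : (k * k - k) * qb <= (k * k - k) * (C * B).
  apply: ler_wpM2l => //. rewrite subr_ge0. nra.
have h3 : C * A <= k * eps * A by apply: ler_wpM2r.
have h4 : 0 <= k * B by apply: mulr_ge0 => //; apply: ltW.
have h5 : 0 <= C * k * B by rewrite -mulrA; apply: mulr_ge0.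
suff : 0 <= k * (qa + qab + (qba + qb) + eps * A + (2 * C * k + 1) * B).
  by rewrite pmulr_rge0.
nra.
Qed.
End Aux.

Lemma real_eps (R : realType) (r s : R) : 0 <= s ->
  (forall eps : R, 0 < eps -> 0 <= r + eps * s) -> 0 <= r.
Proof.
move=> s0 He. rewrite leNgt; apply/negP => r0.
have e0 : 0 < - r / (s + 1) by rewrite divr_gt0 // ?oppr_gt0 // ltr_wpDl.
have := He _ e0. apply/negP; rewrite -ltNge.
have s1 : 0 < s + 1 by rewrite ltr_wpDl.
have -> : r + - r / (s + 1) * s = r / (s + 1) by field; rewrite gt_eqF.
by rewrite pmulr_llt0 ?invr_gt0.
Qed.

Unset Implicit Arguments. Set Strict Implicit.

Theorem lemma4p5 (R : realType) (H : lmodType R[i]) (ip : H -> H -> R[i])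
  (hH : is_hilbert ip) (V : (H -> H) -> Prop) (hV : operator_system ip V)
  (p : H -> H) (pV : V p) (hp : projection ip p)
  (x : H -> H) (xV : V x) (hx : selfadjoint ip x) :
  op_pos ip (fun h => p (x (p h))) <->
  (forall eps : R, 0 < eps -> exists t : R, 0 < t /\
     op_pos ip (fun h => x h + eps%:C *: p h + t%:C *: (h - p h))).
Proof.
case: hH => hip _. case: hV => hVb _.
have bx := hVb _ xV. case: hp => bp [sp pp].
split.
- move=> Hpos eps e0.
  have [C [C0 HC]] := bound_Q hip hx bx.
  exists (2 * C * (1 + C / eps) + 1). split.
    rewrite ltr_wpDl // mulr_ge0 // ?mulr_ge0 // addr_ge0 // divr_ge0 // ltW //.
  move=> h.
  set t := 2 * C * (1 + C / eps) + 1.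
  pose T := fun h => x h + eps%:C *: p h + t%:C *: (h - p h).
  change (0 <= ip (T h) h).
  apply: pos_of.
    apply: (selfadj_Im hip) => u v; rewrite /T.
    rewrite !(ipDl hip) !(ipZl hip) !(ipBl hip) !(ipDr hip) !(ipZRr hip) !(ipBr hip).
    by rewrite hx sp.
  set a := p h. set b := h - a.
  have hab : h = a + b by rewrite /b addrC subrK.
  have pb : p b = 0 by rewrite /b (linB bp) /a pp subrr.
  have iab : ip a b = 0 by rewrite /a sp pb (ip0r hip).
  have iba : ip b a = 0 by rewrite /a -sp pb (ip0l hip).
  have Qa : 0 <= complex.Re (ip (x a) a).
    have := Hpos h. rewrite /= sp -/a lecE => /andP[_ //].
  have := core hip hx bx C0 HC iab iba Qa e0.
  by rewrite -hab /T.
- move=> He h /=.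
  rewrite sp.
  have E : forall eps : R, 0 < eps -> 0 <= ip (x (p h)) (p h) + eps%:C * ip (p h) (p h).
    move=> eps e0. have [t [t0 Ht]] := He eps e0.
    have := Ht (p h). by rewrite /= pp subrr scaler0 addr0 (ipDl hip) (ipZl hip).
  have := E 1 ltr01. rewrite !lecE => /andP[/eqP Im1 _].
  apply/andP; split.
    move: Im1. have := ip_ge0 hip (p h). rewrite lecE => /andP[/eqP I2 _].
    case: (ip (x (p h)) (p h)) => q1 q2. case: (ip (p h) (p h)) I2 => w1 w2 /= ->.
    by rewrite mulr0 mul0r !addr0 => ->.
  rewrite Re0; apply: (real_eps (Reip_ge0 hip (p h))) => eps e0.
  have := E eps e0. rewrite lecE => /andP[_]. by rewrite (ReD) ReMr.
Qed.
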